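(* Let $\Lambda$ and $\Lambda'$ be any permutation local limits. Then there exists a sequence of permutations $(\varphi_j)_{j\in\mathbb{N}}$ that converges locally to $\Lambda$ such that the sequence of inverse permutations $(\varphi_j^{-1})_{j\in\mathbb{N}}$ converges locally to $\Lambda'$.
   Context: Let $S$ be the set of all finite permutations. For $\pi\in S_k$ and $\sigma\in S_n$ with $k\le n$, the local density $\rho_k(\pi,\sigma)$ is the number of $i\in\{1,\dots,n-k+1\}$ such that $\sigma(i)\dots\sigma(i+k-1)$ is order-isomorphic to $\pi$, divided by $n-k+1$. A sequence $(\sigma_j)$ with $|\sigma_j|\to\infty$ converges locally to $\Lambda\in[0,1]^S$ if $\rho_{|\pi|}(\pi,\sigma_j)\to\Lambda_\pi$ for every $\pi\in S$. A permutation local limit is a vector $\Lambda\in[0,1]^S$ which is the local limit of some locally convergent sequence of permutations. $\varphi^{-1}$ denotes the inverse permutation. *)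

(* Defs.v *)
From Stdlib Require Import Reals.
From mathcomp Require Import all_boot fingroup perm.
Set Implicit Arguments. Unset Strict Implicit. Unset Printing Implicit Defensive.

Definition fperm := {n : nat & 'S_n}.
Definition fsize (s : fperm) : nat := projT1 s.

(* sigma viewed as a function on nat (0-based positions, values in 0..n-1). *)
Definition permval (n : nat) (s : 'S_n) (x : nat) : nat :=
  match @insub nat (fun y => y < n) 'I_n x with
  | Some i => nat_of_ord (s i)
  | None => 0
  end.

Definition occurs_at (k n : nat) (pi : 'S_k) (s : 'S_n) (i : nat) : bool :=
  [forall a : 'I_k, forall b : 'I_k,
     (permval s (i + a) < permval s (i + b)) == (pi a < pi b)].

Definition occ_count (k n : nat) (pi : 'S_k) (s : 'S_n) : nat :=
  \sum_(0 <= i < n - k + 1) (occurs_at pi s i : nat).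

(* Local density rho_k(pi, sigma); set to 0 when k > n (undefined there,
   irrelevant for limits since |sigma_j| -> oo). *)
Definition local_density (k n : nat) (pi : 'S_k) (s : 'S_n) : R :=
  if k <= n then Rdiv (INR (occ_count pi s)) (INR (n - k + 1)) else R0.

Definition fvec := forall k : nat, 'S_k -> R.

Definition converges_locally (sq : nat -> fperm) (L : fvec) : Prop :=
  (forall M : nat, exists J : nat, forall j : nat, (J <= j)%coq_nat -> M <= fsize (sq j)) /\
  (forall (k : nat) (pi : 'S_k),
      Un_cv (fun j => local_density pi (projT2 (sq j))) (L k pi)).

Definition in_unit_cube (L : fvec) : Prop :=
  forall (k : nat) (pi : 'S_k), Rle R0 (L k pi) /\ Rle (L k pi) R1.

Definition perm_local_limit (L : fvec) : Prop :=
  in_unit_cube L /\ exists sq : nat -> fperm, converges_locally sq L.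

Definition fperm_inv (s : fperm) : fperm := existT _ (projT1 s) ((projT2 s)^-1)%g.

(* Main.v *)
Require Import Defs.
From Stdlib Require Import Reals Lra Lia.
From mathcomp Require Import all_boot fingroup perm.
From mathcomp Require Import zify.
Set Implicit Arguments. Unset Strict Implicit. Unset Printing Implicit Defensive.

Lemma permval_ord n (s : 'S_n) (i : 'I_n) : permval s i = s i.
Proof. by rewrite /permval valK. Qed.

Lemma permval_lt n (s : 'S_n) x : x < n -> permval s x < n.
Proof. move=> hx. by rewrite (_ : x = Ordinal hx) // permval_ord. Qed.

Lemma block_sum (F : nat -> nat) nb bs :
  \sum_(0 <= i < nb * bs) F i = \sum_(0 <= b < nb) \sum_(0 <= r < bs) F (b * bs + r).
Proof.
elim: nb => [|nb IH]; first by rewrite mul0n !big_geq.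
rewrite big_nat_recr //= -IH mulSn addnC (big_cat_nat (n := nb*bs)) ?leq_addr //=.
congr (_ + _).
have -> : nb * bs = 0 + nb * bs by [].
rewrite big_addn add0n addKn. apply: eq_big_nat => i _. by rewrite addnC.
Qed.

Lemma leq_sum_nat m n (F G : nat -> nat) : (forall i, m <= i < n -> F i <= G i) ->
  \sum_(m <= i < n) F i <= \sum_(m <= i < n) G i.
Proof. move=> h; rewrite big_nat_cond [X in _ <= X]big_nat_cond; apply: leq_sum => i /andP [hi _]; exact: h. Qed.

Section Count.
Variables (k N bs nb : nat) (pi : 'S_k) (psi : 'S_N) (sig : 'S_bs).
Hypothesis k0 : 0 < k.
Hypothesis kbs : k <= bs.
Hypothesis nb0 : 0 < nb.
Hypothesis HN : N = nb * bs.
Hypothesis Hord : forall b x y, b < nb -> x < bs -> y < bs ->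
  (permval psi (b*bs+x) < permval psi (b*bs+y)) = (permval sig x < permval sig y).

Lemma occ_block b r : b < nb -> r + k <= bs ->
  occurs_at pi psi (b * bs + r) = occurs_at pi sig r.
Proof.
move=> hb hr; rewrite /occurs_at; apply: eq_forallb => a; apply: eq_forallb => c.
rewrite -!addnA Hord //.
- have := ltn_ord a; have := ltn_ord c; lia.
- have := ltn_ord a; have := ltn_ord c; lia.
Qed.

Let f i := (occurs_at pi psi i : nat).
Let W := bs - k + 1.
Let o := occ_count pi sig.

Lemma block_bounds b : b < nb ->
  o <= \sum_(0 <= r < bs) f (b * bs + r) <= o + k.
Proof.
move=> hb.
have hW : W <= bs by rewrite /W; lia.
rewrite (big_cat_nat (n := W)) //= /=.
have -> : \sum_(0 <= r < W) f (b * bs + r) = o.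
  rewrite /o /occ_count -/W; apply: eq_big_nat => r /andP [_ hr].
  by rewrite /f occ_block //; rewrite /W in hr; lia.
rewrite leq_addr /= leq_add2l.
apply: (leq_trans (n := \sum_(W <= r < bs) 1)).
  by apply: leq_sum => i _; rewrite /f; case: occurs_at.
rewrite sum_nat_const_nat /W; lia.
Qed.

Lemma o_le : o <= W.
Proof.
rewrite /o /occ_count -/W.
apply: (leq_trans (n := \sum_(0 <= r < W) 1)).
  by apply: leq_sum => i _; case: occurs_at.
rewrite sum_nat_const_nat; lia.
Qed.

Lemma count_bounds : nb * o <= occ_count pi psi <= nb * (o + k).
Proof.
have [nb' enb] : exists nb', nb = nb'.+1 by exists nb.-1; lia.
have HN' : N = nb'.+1 * bs by rewrite HN enb.
have e : N - k + 1 = nb' * bs + W by rewrite HN' /W; lia.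
rewrite /occ_count e (big_cat_nat (n := nb'*bs)) ?leq_addr //=.
have -> : nb' * bs = 0 + nb' * bs by [].
rewrite big_addn add0n addKn block_sum -/f.
have -> : \sum_(0 <= i < W) (occurs_at pi psi (i + (0 + nb' * bs)) : nat) = o.
  rewrite /o /occ_count -/W; apply: eq_big_nat => r /andP [_ hr].
  rewrite add0n addnC occ_block //; rewrite /W in hr; lia.
have h1 : \sum_(0 <= b < nb') \sum_(0 <= r < bs) f (b * bs + r) <= nb' * (o + k).
  apply: (leq_trans (n := \sum_(0 <= b < nb') (o + k))).
    apply: leq_sum_nat => b /andP [_ hb]; have := block_bounds (b := b); lia.
  by rewrite sum_nat_const_nat subn0.
have h2 : nb' * o <= \sum_(0 <= b < nb') \sum_(0 <= r < bs) f (b * bs + r).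
  apply: (leq_trans (n := \sum_(0 <= b < nb') o)).
    by rewrite sum_nat_const_nat subn0.
  apply: leq_sum_nat => b /andP [_ hb]; have := block_bounds (b := b); lia.
move: h1 h2; rewrite /f enb; lia.
Qed.
End Count.
Lemma permval_inj n (s : 'S_n) x y : x < n -> y < n -> permval s x = permval s y -> x = y.
Proof.
move=> hx hy; rewrite (_ : x = Ordinal hx) // (_ : y = Ordinal hy) // !permval_ord.
by move/val_inj/perm_inj => [].
Qed.

Lemma hord_of N bs nb (psi : 'S_N) (sig : 'S_bs) (g : nat -> nat) :
  (forall b x, b < nb -> x < bs -> permval psi (b*bs+x) = permval sig x * nb + g b) ->
  forall b x y, b < nb -> x < bs -> y < bs ->
    (permval psi (b*bs+x) < permval psi (b*bs+y)) = (permval sig x < permval sig y).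
Proof.
move=> H b x y hb hx hy; rewrite !H // ltn_add2r ltn_pmul2r //; lia.
Qed.

Section Build.
Variables (m n : nat) (s : 'S_m) (t : 'S_n).

Definition bval (p : nat) : nat := permval s (p %% m) * n + permval t (p %/ m).

Lemma bval_lt p : p < m * n -> bval p < m * n.
Proof.
move=> hp.
have m0 : 0 < m by case: m hp => //.
have hq : p %/ m < n by rewrite ltn_divLR // mulnC.
have h1 := permval_lt s (ltn_pmod p m0).
have h2 := permval_lt t hq.
rewrite /bval; nia.
Qed.

Definition bfun (p : 'I_(m * n)) : 'I_(m * n) := insubd p (bval p).

Lemma bfunE p : val (bfun p) = bval p.
Proof. by rewrite val_insubd bval_lt. Qed.

Lemma bval_inj p q : p < m * n -> q < m * n -> bval p = bval q -> p = q.
Proof.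
move=> hp hq.
have m0 : 0 < m by case: m hp => //.
have n0 : 0 < n by case: n hp => //; rewrite muln0.
have hpq : p %/ m < n by rewrite ltn_divLR // mulnC.
have hqq : q %/ m < n by rewrite ltn_divLR // mulnC.
have c1 := permval_lt t hpq. have c2 := permval_lt t hqq.
rewrite /bval => e.
have ea : permval s (p %% m) = permval s (q %% m).
  have := congr1 (fun z => z %/ n) e; rewrite /= !divnMDl // (divn_small c1) (divn_small c2) !addn0; by [].
have ec : permval t (p %/ m) = permval t (q %/ m).
  have := congr1 (fun z => z %% n) e; rewrite /= !modnMDl (modn_small c1) (modn_small c2); by [].
move/(permval_inj (ltn_pmod _ m0) (ltn_pmod _ m0)): ea => ea.
move/(permval_inj hpq hqq): ec => ec.
by rewrite (divn_eq p m) (divn_eq q m) ea ec.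
Qed.

Lemma bfun_inj : injective bfun.
Proof.
move=> p q e; apply: val_inj; have := congr1 val e; rewrite !bfunE; apply: bval_inj => //.
Qed.

Definition bperm : 'S_(m * n) := perm bfun_inj.

Lemma bperm_val b x : b < n -> x < m -> permval bperm (b * m + x) = permval s x * n + permval t b.
Proof.
move=> hb hx.
have hp : b * m + x < m * n by nia.
rewrite (_ : b * m + x = Ordinal hp) // permval_ord permE bfunE /= /bval.
rewrite modnMDl modn_small // divnMDl ?divn_small ?addn0 //; lia.
Qed.

Lemma binv_val c d : c < m -> d < n ->
  permval bperm^-1 (c * n + d) = permval t^-1 d * m + permval s^-1 c.
Proof.
move=> hc hd.
have hv : c * n + d < m * n by nia.
have a1 := permval_lt s^-1 hc. have a2 := permval_lt t^-1 hd.
have hq : permval t^-1 d * m + permval s^-1 c < m * n by nia.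
have e : bperm (Ordinal hq) = Ordinal hv.
  apply: val_inj; rewrite permE bfunE /= /bval.
  rewrite modnMDl modn_small // divnMDl ?divn_small ?addn0 //; last by lia.
  rewrite (_ : c = Ordinal hc) // (_ : d = Ordinal hd) // !permval_ord !permKV.
  by [].
rewrite (_ : c * n + d = Ordinal hv) // permval_ord -e permK //.
Qed.
End Build.
Open Scope R_scope.

Lemma real_bound (A o D W nb k bs : R) :
  1 <= k -> 2 * k <= bs -> 1 <= nb -> 1 <= W ->
  W = bs - k + 1 -> D = nb * bs - k + 1 ->
  nb * o <= A -> A <= nb * (o + k) -> 0 <= o -> o <= W ->
  Rabs (A / D - o / W) <= 2 * k / bs.
Proof.
move=> k1 kb nb1 W1 eW eD h1 h2 o0 oW.
have k0 : 0 < k by lra.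
have bs0 : 0 < bs by lra.
have hD : nb * bs <= 2 * D.
  rewrite eD. nra.
have D0 : 0 < D by nra.
have e : A / D - o / W = (A * W - o * D) / (D * W) by field; lra.
have hn1 : A * W - o * D <= nb * k * W.
  have := Rmult_le_compat_r W _ _ ltac:(lra) h2.
  have : 0 <= o * ((nb - 1) * (k - 1)) by apply: Rmult_le_pos => //; apply: Rmult_le_pos; lra.
  subst W D; nra.
have hn2 : - (nb * k * W) <= A * W - o * D.
  have := Rmult_le_compat_r W _ _ ltac:(lra) h1.
  have : o * ((nb - 1) * (k - 1)) <= W * (nb * k).
    apply: Rmult_le_compat => //.
    - apply: Rmult_le_pos; lra.
    - nra.
  subst W D; nra.
have key : nb * k * W / (D * W) <= 2 * k / bs.
  apply: (Rmult_le_reg_r (D * W * bs)); first by apply: Rmult_lt_0_compat; nra.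
  have -> : nb * k * W / (D * W) * (D * W * bs) = nb * k * W * bs by field; lra.
  have -> : 2 * k / bs * (D * W * bs) = 2 * k * D * W by field; lra.
  nra.
rewrite e /Rdiv Rabs_mult Rabs_inv.
rewrite (Rabs_right (D * W)); last by nra.
rewrite -/(Rdiv _ (D * W)).
apply: Rle_trans key.
apply: Rmult_le_compat_r; first by apply: Rlt_le; apply: Rinv_0_lt_compat; nra.
by apply: Rabs_le; lra.
Qed.

Lemma leR (m n : nat) : (m <= n)%N -> INR m <= INR n.
Proof. by move/leP/le_INR. Qed.

Lemma INR_sub1 (a k : nat) : (k <= a)%N -> INR (a - k + 1) = INR a - INR k + 1.
Proof. move=> h; rewrite plus_INR minus_INR /=; [lra | exact/leP]. Qed.

Lemma dens_approx k N bs nb (pi : 'S_k) (psi : 'S_N) (sig : 'S_bs) :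
  (0 < k)%N -> (2 * k <= bs)%N -> (0 < nb)%N -> N = (nb * bs)%N ->
  (forall b x y, (b < nb)%N -> (x < bs)%N -> (y < bs)%N ->
    (permval psi (b*bs+x) < permval psi (b*bs+y))%N = (permval sig x < permval sig y)%N) ->
  Rabs (local_density pi psi - local_density pi sig) <= 2 * INR k / INR bs.
Proof.
move=> k0 kb nb0 HN Hord.
have kbs : (k <= bs)%N by lia.
have [c1 c2] := andP (count_bounds pi k0 kbs nb0 HN Hord).
have oW := o_le pi sig k0 kbs.
rewrite /local_density.
have -> : (k <= N)%N by rewrite HN; nia.
rewrite kbs.
apply: (real_bound (nb := INR nb) (k := INR k) (bs := INR bs)).
- by apply: (leR (m := 1)).
- by rewrite (_ : 2 = INR 2) -?mult_INR; [apply: leR | simpl; lra].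
- by apply: (leR (m := 1)).
- by apply: (leR (m := 1)); lia.
- by apply: INR_sub1.
- by rewrite INR_sub1 ?HN ?mult_INR //; nia.
- by rewrite -mult_INR; apply: leR.
- by rewrite -plus_INR -mult_INR; apply: leR.
- by apply: pos_INR.
- by apply: leR; apply: (oW _ _ nb0 HN).
Qed.


Lemma cv_ext (u v : nat -> R) l : (forall j, v j = u j) -> Un_cv u l -> Un_cv v l.
Proof. move=> h H eps he; have [N HN] := H eps he; exists N => j hj; rewrite h; exact: HN. Qed.

Lemma cv_approx (u v : nat -> R) (sz : nat -> nat) (l c : R) : 0 <= c -> Un_cv u l ->
  (forall M, exists J, forall j, (J <= j)%coq_nat -> (M <= sz j)%N) ->
  (exists J, forall j, (J <= j)%coq_nat -> Rabs (v j - u j) <= c / INR (sz j)) -> Un_cv v l.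
Proof.
move=> c0 Hu Hsz [J3 H3] eps he.
have [N1 H1] := Hu (eps / 2) ltac:(lra).
have [n0 Hn0] := INR_archimed (eps / 2) c ltac:(lra).
have [J2 H2] := Hsz n0.+1.
exists (Nat.max N1 (Nat.max J2 J3)) => j hj.
have hs := H2 j ltac:(lia). have hv := H3 j ltac:(lia). have hu := H1 j ltac:(lia).
have hs' : INR n0 + 1 <= INR (sz j) by rewrite -S_INR; apply: leR.
have s0 : 0 < INR (sz j) by have := pos_INR n0; lra.
have hc : c / INR (sz j) <= eps / 2.
  apply: (Rmult_le_reg_r (INR (sz j))) => //.
  rewrite /Rdiv Rmult_assoc Rinv_l; last by lra.
  have := pos_INR n0. nra.
rewrite /R_dist in hu *.
have := Rabs_triang (v j - u j) (u j - l).
rewrite (_ : v j - u j + (u j - l) = v j - l); last by ring.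
lra.
Qed.

Lemma dens0 (pi : 'S_0) N (psi : 'S_N) : local_density pi psi = 1.
Proof.
rewrite /local_density /= /occ_count.
have -> : \sum_(0 <= i < N - 0 + 1) (occurs_at pi psi i : nat) = \sum_(0 <= i < N - 0 + 1) 1.
  apply: eq_big_nat => i _. rewrite /occurs_at.
  by have -> : [forall a : 'I_0, forall b : 'I_0, ((permval psi (i + a) < permval psi (i + b))%N == (pi a < pi b)%N)] = true by apply/forallP => -[].
rewrite sum_nat_const_nat subn0 muln1 /Rdiv Rinv_r //.
rewrite subn0 addn1; apply: not_0_INR => //.
Qed.

Theorem mainTheorem11 (L L' : fvec) :
  perm_local_limit L -> perm_local_limit L' ->
  exists phi : nat -> fperm,
    converges_locally phi L /\ converges_locally (fun j => fperm_inv (phi j)) L'.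
Proof.
move=> [_ [sq [Hs1 Hs2]]] [_ [sq' [Ht1 Ht2]]].
pose ms j := fsize (sq j). pose ns j := fsize (sq' j).
exists (fun j => existT _ (ms j * ns j)%N (bperm (projT2 (sq j)) (projT2 (sq' j))^-1)).
have Hsz : forall M, exists J, forall j, (J <= j)%coq_nat -> (M <= ms j * ns j)%N.
  move=> M; have [J1 h1] := Hs1 M; have [J2 h2] := Ht1 1%N.
  exists (Nat.max J1 J2) => j hj; have := h1 j ltac:(lia); have := h2 j ltac:(lia).
  rewrite /ms /ns; nia.
split; split => //; move=> k pi /=.
- case: k pi => [|k] pi.
    by apply: (cv_ext (u := fun j => local_density pi (projT2 (sq j)))) => // j; rewrite !dens0.
  apply: (cv_approx (u := fun j => local_density pi (projT2 (sq j))) (sz := ms) (c := 2 * INR k.+1)) => //.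
  + have := pos_INR k.+1; lra.
  + have [J1 h1] := Hs1 (2 * k.+1)%N; have [J2 h2] := Ht1 1%N.
    exists (Nat.max J1 J2) => j hj; have e1 := h1 j ltac:(lia); have e2 := h2 j ltac:(lia).
    apply: (dens_approx (nb := ns j)) => //; try by rewrite mulnC.
    apply: (hord_of (g := fun b => permval (projT2 (sq' j))^-1 b)) => b x hb hx.
    exact: bperm_val.
- case: k pi => [|k] pi.
    by apply: (cv_ext (u := fun j => local_density pi (projT2 (sq' j)))) => // j; rewrite !dens0.
  apply: (cv_approx (u := fun j => local_density pi (projT2 (sq' j))) (sz := ns) (c := 2 * INR k.+1)) => //.
  + have := pos_INR k.+1; lra.
  + have [J1 h1] := Ht1 (2 * k.+1)%N; have [J2 h2] := Hs1 1%N.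
    exists (Nat.max J1 J2) => j hj; have e1 := h1 j ltac:(lia); have e2 := h2 j ltac:(lia).
    apply: (dens_approx (nb := ms j)) => //.
    apply: (hord_of (g := fun c => permval (projT2 (sq j))^-1 c)) => c d hc hd.
    by rewrite binv_val // invgK.
Qed.
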